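(* Consider searching on a line with turn cost $t$ and lower bound $\lambda>0$. If $\frac{t}{2\lambda}>1$, then every search strategy has competitive ratio strictly greater than $9$.
   Context: Searching on a line with turn cost. Fix $\lambda>0$, $t\ge 0$. A search strategy is a sequence $\mathcal S(i)=(x_i,r_i)$, $i\ge1$, with $x_i>0$, $r_i\in\{\mathrm{left},\mathrm{right}\}$ and $\sup\{x_i:r_i=\mathrm{left}\}=\sup\{x_i:r_i=\mathrm{right}\}=\infty$. At step $i$ the searcher walks distance $x_i$ from the origin along ray $r_i$ and, if the target is not found, walks back to the origin, paying an additional turn cost $t$; thus each unsuccessful step costs $2x_i+t$. The target is on one of the two rays at unknown distance $D\ge\lambda$ and is found at the first step $j$ with $r_j$ equal to its ray and $x_j\ge D$; the total cost is then $\sum_{i=1}^{j-1}(2x_i+t)+D$. The competitive ratio of $\mathcal S$ is the supremum over all target positions of total cost divided by $D$. *)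

(* Defs.v *)
From Stdlib Require Import Reals Lra.
Open Scope R_scope.

Inductive ray := left | right.

(* A search strategy: step i (i = 0,1,2,... corresponds to the paper's
   i = 1,2,3,...) goes distance x i along ray r i. *)
Record strategy := mkStrategy { sx : nat -> R ; sr : nat -> ray }.

Definition valid_strategy (s : strategy) : Prop :=
  (forall i, 0 < sx s i) /\
  (forall M : R, exists i, sr s i = left /\ M < sx s i) /\
  (forall M : R, exists i, sr s i = right /\ M < sx s i).

Fixpoint prefix_cost (s : strategy) (t : R) (n : nat) : R :=
  match n with
  | O => 0
  | Datatypes.S n' => prefix_cost s t n' + (2 * sx s n' + t)
  end.

Definition found_at (s : strategy) (b : ray) (D : R) (j : nat) : Prop :=
  sr s j = b /\ D <= sx s j /\
  (forall i, (i < j)%nat -> ~ (sr s i = b /\ D <= sx s i)).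

Definition search_cost (s : strategy) (t D : R) (j : nat) : R :=
  prefix_cost s t j + D.

(* The competitive ratio (a supremum, possibly +infinity) is > c iff this fails. *)
Definition competitive_ratio_le (s : strategy) (lam t c : R) : Prop :=
  forall (b : ray) (D : R) (j : nat),
    lam <= D -> found_at s b D j -> search_cost s t D j / D <= c.

(* Main.v *)
Require Import Defs.
From Stdlib Require Import Reals Lra Arith Lia Wf_nat IndefiniteDescription Classical.
Open Scope R_scope.

Lemma arith_contra (p : nat -> R) (t : R) : 0 <= t ->
  (forall n, 0 <= p n) ->
  (forall n, p (S (S n)) <= 4 * p (S n) - 4 * p n - 4 * t) ->
  p 1%nat - 2 * p 0%nat - 4 * t < 0 -> False.
Proof.
  intros Ht Hpos Hrec Hh0.
  set (h0 := p 1%nat - 2 * p 0%nat - 4 * t) in *.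
  assert (Hg : forall n, p (S n) - 2 * p n - 4 * t <= 2 ^ n * h0).
  { induction n as [|n IH].
    - simpl. unfold h0. lra.
    - simpl. specialize (Hrec n). lra. }
  assert (Hq : forall n, p n <= 2 ^ n * (p 0%nat + 4 * t + INR n * h0 / 2) - 4 * t).
  { induction n as [|n IH].
    - simpl. lra.
    - specialize (Hg n). rewrite S_INR. simpl. nra. }
  destruct (INR_unbounded ((p 0%nat + 4 * t) * 2 / (- h0))) as [n Hn].
  specialize (Hq n). specialize (Hpos n).
  assert (Hpow : 0 < 2 ^ n) by (apply pow_lt; lra).
  assert (Hneg : p 0%nat + 4 * t + INR n * h0 / 2 < 0).
  { apply Rmult_gt_compat_r with (r := - h0) in Hn; [|lra].
    unfold Rdiv in Hn. rewrite Rmult_assoc, Rinv_l in Hn by lra. lra. }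
  assert (2 ^ n * (p 0%nat + 4 * t + INR n * h0 / 2) < 0) by nra.
  lra.
Qed.

Definition other (b : ray) : ray := match b with left => right | right => left end.
Definition req (a b : ray) : bool :=
  match a, b with left, left => true | right, right => true | _, _ => false end.
Lemma req_true a b : req a b = true <-> a = b.
Proof. destruct a, b; simpl; split; congruence. Qed.
Lemma other_neq b : other b <> b.
Proof. destruct b; discriminate. Qed.
Lemma other_other b : other (other b) = b.
Proof. destruct b; reflexivity. Qed.

Fixpoint maxr (s : strategy) (lam : R) (b : ray) (n : nat) : R :=
  match n with
  | O => lam
  | S n' => if req (sr s n') b then Rmax (maxr s lam b n') (sx s n') else maxr s lam b n'
  end.

Definition recd (s : strategy) (lam : R) (k : nat) : Prop := maxr s lam (sr s k) k < sx s k.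

Section S.
Variables (s : strategy) (lam t : R).
Hypothesis Hx : forall i, 0 < sx s i.
Hypothesis Ht : 0 <= t.

Lemma maxr_ge_lam b n : lam <= maxr s lam b n.
Proof.
  induction n; simpl. lra. destruct (req (sr s n) b). eapply Rle_trans; [eauto| apply Rmax_l]. auto.
Qed.

Lemma maxr_mono b n : maxr s lam b n <= maxr s lam b (S n).
Proof. simpl. destruct (req (sr s n) b). apply Rmax_l. lra. Qed.

Lemma maxr_mono' b a n : (a <= n)%nat -> maxr s lam b a <= maxr s lam b n.
Proof. induction 1. lra. eapply Rle_trans; [eauto|apply maxr_mono]. Qed.

Lemma maxr_ge b i n : (i < n)%nat -> sr s i = b -> sx s i <= maxr s lam b n.
Proof.
  intros Hi Hb. apply Rle_trans with (maxr s lam b (S i)); [|apply maxr_mono'; lia].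
  simpl. assert (req (sr s i) b = true) by (apply req_true; auto). rewrite H. apply Rmax_r.
Qed.

Lemma maxr_S_le b n : maxr s lam b (S n) <= Rmax (maxr s lam b n) (sx s n).
Proof. simpl. destruct (req (sr s n) b). lra. apply Rmax_l. Qed.

Lemma maxr_nonrec b i : ~ (sr s i = b /\ recd s lam i) -> maxr s lam b (S i) = maxr s lam b i.
Proof.
  intros H. simpl. destruct (req (sr s i) b) eqn:E; auto.
  apply req_true in E. unfold recd in H. rewrite E in H.
  apply Rmax_left. apply Rnot_lt_le. intro. apply H; auto.
Qed.

Lemma maxr_norec b a j : (a <= j)%nat ->
  (forall i, (a <= i < j)%nat -> ~ (sr s i = b /\ recd s lam i)) ->
  maxr s lam b j = maxr s lam b a.
Proof.
  induction 1 as [|j Hle IH]; intros H; auto.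
  rewrite maxr_nonrec. apply IH. intros; apply H; lia. apply H; lia.
Qed.

Lemma prefix_S n : prefix_cost s t (S n) = prefix_cost s t n + (2 * sx s n + t).
Proof. reflexivity. Qed.

Lemma prefix_nonneg n : 0 <= prefix_cost s t n.
Proof. induction n; simpl. lra. specialize (Hx n). lra. Qed.

Lemma rec_cost b a j : recd s lam a -> sr s a = b -> (a < j)%nat ->
  2 * maxr s lam b j + t <= prefix_cost s t j - prefix_cost s t a.
Proof.
  intros Hr Hb. induction 1 as [|m Hle IH].
  - rewrite prefix_S. cbn [maxr]. assert (req (sr s a) b = true) by (apply req_true; auto).
    rewrite H. unfold recd in Hr. rewrite Hb in Hr. rewrite Rmax_right by lra. lra.
  - rewrite prefix_S. pose proof (maxr_S_le b m). pose proof (Hx m) as Hxm.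
    pose proof (maxr_ge b a m ltac:(lia) Hb). pose proof (Hx a).
    unfold Rmax in H. destruct (Rle_dec _ _); lra.
Qed.

Lemma rec_exists b a i : sr s i = b -> (a <= i)%nat -> maxr s lam b a < sx s i ->
  exists k, (a <= k <= i)%nat /\ sr s k = b /\ recd s lam k.
Proof.
  intros Hb Hai Hlt.
  destruct (classic (exists k, (a <= k < i)%nat /\ sr s k = b /\ recd s lam k)) as [[k Hk]|Hn].
  - exists k. intuition lia.
  - exists i. split; [lia|]. split; auto. unfold recd. rewrite Hb.
    rewrite (maxr_norec b a i); auto. intros k Hk [H1 H2]. apply Hn. exists k. auto.
Qed.

Lemma key (b : ray) k : competitive_ratio_le s lam t 9 -> 0 < lam -> sr s k = b -> recd s lam k ->
  prefix_cost s t k <= 8 * maxr s lam b k.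
Proof.
  intros Hc Hlam Hb Hr. unfold recd in Hr. rewrite Hb in Hr.
  set (m := maxr s lam b k) in *. set (P := prefix_cost s t k).
  pose proof (maxr_ge_lam b k) as Hml. fold m in Hml.
  apply Rnot_lt_le. intro HP.
  set (D := (m + Rmin (sx s k) (P / 8)) / 2).
  assert (HD1 : m < D /\ D <= sx s k /\ D < P / 8).
  { unfold D. unfold Rmin. destruct (Rle_dec _ _); lra. }
  assert (Hf : found_at s b D k).
  { split; auto. split; [lra|]. intros i Hi [Hbi Hdi].
    pose proof (maxr_ge b i k Hi Hbi). fold m in H. lra. }
  specialize (Hc b D k ltac:(lra) Hf). unfold search_cost in Hc. fold P in Hc.
  assert (0 < D) by lra.
  apply Rmult_le_compat_r with (r := D) in Hc; [|lra].
  unfold Rdiv in Hc. rewrite Rmult_assoc, Rinv_l in Hc by lra. lra.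
Qed.

End S.

Theorem lemma2 (lam t : R) (Hlam : 0 < lam) (Ht : 0 <= t)
  (Hratio : t / (2 * lam) > 1) (s : strategy) (Hs : valid_strategy s) :
  ~ competitive_ratio_le s lam t 9.
Proof.
  intros Hc. destruct Hs as [Hx [HL HR]].
  assert (Ht2 : 2 * lam < t).
  { apply Rmult_gt_compat_r with (r := 2 * lam) in Hratio; [|lra].
    unfold Rdiv in Hratio. rewrite Rmult_assoc, Rinv_l in Hratio by lra. lra. }
  assert (Hany : forall b M, exists i, sr s i = b /\ M < sx s i).
  { intros [|] M; [apply HL|apply HR]. }
  assert (Hf0 : exists f0, recd s lam f0 /\ forall i, recd s lam i -> (f0 <= i)%nat).
  { destruct (dec_inh_nat_subset_has_unique_least_element (fun k => recd s lam k))
      as [f0 [[H1 H2] _]].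
    - intros n; apply classic.
    - destruct (Hany left lam) as [i [Hi1 Hi2]].
      destruct (rec_exists s lam left 0 i Hi1 ltac:(lia) Hi2) as [k [_ [_ Hk]]].
      exists k; auto.
    - exists f0; auto. }
  destruct Hf0 as [f0 [Hf0r Hf0l]].
  assert (Hnext : forall j, exists i,
     ((j < i)%nat /\ sr s i = other (sr s j) /\ recd s lam i) /\
     forall i', ((j < i')%nat /\ sr s i' = other (sr s j) /\ recd s lam i') -> (i <= i')%nat).
  { intros j.
    destruct (dec_inh_nat_subset_has_unique_least_element
      (fun i => (j < i)%nat /\ sr s i = other (sr s j) /\ recd s lam i)) as [f [[H1 H2] _]].
    - intros n; apply classic.
    - set (b := other (sr s j)).
      set (M := maxr s lam left (S j) + maxr s lam right (S j)).
      assert (HM : forall b', maxr s lam b' (S j) <= M).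
      { pose proof (maxr_ge_lam s lam left (S j)). pose proof (maxr_ge_lam s lam right (S j)).
        intros [|]; unfold M; lra. }
      destruct (Hany b M) as [i [Hi1 Hi2]].
      assert (Hji : (j < i)%nat).
      { destruct (le_lt_dec i j) as [Hij|Hij]; auto. exfalso.
        pose proof (maxr_ge s lam (sr s i) i (S j) ltac:(lia) eq_refl).
        specialize (HM (sr s i)). lra. }
      destruct (rec_exists s lam b (S j) i Hi1 ltac:(lia) ltac:(specialize (HM b); lra))
        as [k [Hk1 [Hk2 Hk3]]].
      exists k. split; [lia|]. auto.
    - exists f; auto. }
  set (next := fun j => proj1_sig (constructive_indefinite_description _ (Hnext j))).
  assert (Hsp : forall j, ((j < next j)%nat /\ sr s (next j) = other (sr s j) /\ recd s lam (next j)) /\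
     forall i', ((j < i')%nat /\ sr s i' = other (sr s j) /\ recd s lam i') -> (next j <= i')%nat).
  { intros j. exact (proj2_sig (constructive_indefinite_description _ (Hnext j))). }
  clearbody next.
  set (f := fun n => Nat.iter n next f0).
  assert (HfS : forall n, f (S n) = next (f n)) by reflexivity.
  assert (Frec : forall n, recd s lam (f n)).
  { intros [|n]. exact Hf0r. rewrite HfS. apply Hsp. }
  assert (Fray : forall n, sr s (f (S n)) = other (sr s (f n))).
  { intros n. rewrite HfS. apply Hsp. }
  assert (Flt : forall n, (f n < f (S n))%nat).
  { intros n. rewrite HfS. apply Hsp. }
  assert (Fleast : forall n i, (f n < i < f (S n))%nat ->
            ~ (sr s i = other (sr s (f n)) /\ recd s lam i)).
  { intros n i Hi [H1 H2]. rewrite HfS in Hi. 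
    pose proof (proj2 (Hsp (f n)) i ltac:(split; [lia|auto])). lia. }
  assert (Hf0e : f 0%nat = f0) by reflexivity.
  clearbody f.
  set (p := fun n => prefix_cost s t (f n)).
  apply (arith_contra p t Ht).
  - intros n. apply prefix_nonneg; auto.
  - intros n. set (b := sr s (f n)).
    assert (Hb2 : sr s (f (S (S n))) = b).
    { rewrite Fray, Fray, other_other. reflexivity. }
    pose proof (key s lam t b (f (S (S n))) Hc Hlam Hb2 (Frec _)) as K.
    rewrite (maxr_norec s lam b (S (f (S n))) (f (S (S n)))) in K.
    2: { pose proof (Flt (S n)); lia. }
    2: { intros i Hi. pose proof (Fleast (S n) i ltac:(lia)) as Hl.
         rewrite Fray, other_other in Hl. exact Hl. }
    rewrite maxr_nonrec in K.
    2: { intros [H1 _]. rewrite Fray in H1. apply (other_neq b). exact H1. }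
    pose proof (rec_cost s lam t Hx Ht b (f n) (f (S n)) (Frec n) eq_refl (Flt n)) as K2.
    unfold p. lra.
  - set (b := sr s (f 1%nat)).
    pose proof (key s lam t b (f 1%nat) Hc Hlam eq_refl (Frec _)) as K.
    rewrite (maxr_norec s lam b 0 (f 1%nat)) in K; [| lia |].
    2: { intros i Hi [H1 H2].
         destruct (lt_eq_lt_dec i (f 0%nat)) as [[Hlt|Heq]|Hgt].
         - specialize (Hf0l i H2). rewrite Hf0e in Hlt. lia.
         - subst i. unfold b in H1. rewrite Fray in H1. apply (other_neq _ (eq_sym H1)).
         - apply (Fleast 0%nat i ltac:(lia)). split; auto. unfold b in H1. rewrite Fray in H1. auto. }
    simpl in K. pose proof (prefix_nonneg s t Hx Ht (f 0%nat)). unfold p. lra.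
Qed.
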